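(* For every integer $n\ge 3$, $\mathrm{ex}(n,M_2,S_4)=n(n-3)/2$.
   Context: $M_2$ is the matching with two edges and $S_4$ is the star on $4$ vertices (a center with three leaves). For graphs $H,G$, $\mathcal{N}(H,G)$ is the number of subgraphs of $G$ isomorphic to $H$, and $\mathrm{ex}(n,H,F)$ is the maximum of $\mathcal{N}(H,G)$ over $F$-free graphs $G$ on $n$ vertices. *)

(* Defs.v *)
From mathcomp Require Import all_boot.
Set Implicit Arguments. Unset Strict Implicit. Unset Printing Implicit Defensive.

Definition simple_graph (V : finType) (e : rel V) : Prop :=
  (forall x y, e x y = e y x) /\ (forall x, e x x = false).

Definition edgeset (V : finType) (e : rel V) : {set {set V}} :=
  [set A : {set V} | [exists x, exists y, e x y && (A == [set x; y])]].

(* (S, F) is a subgraph of G = (V, e) isomorphic to H = ('I_k, eH):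
   F is a set of edges of G, each contained in S, and there is a bijection
   f : 'I_k -> S with  eH i j  <->  {f i, f j} \in F. *)
Definition is_copy (k : nat) (eH : rel 'I_k) (V : finType) (e : rel V)
    (p : {set V} * {set {set V}}) : bool :=
  let: (Sv, F) := p in
  [&& F \subset edgeset e,
      [forall A in F, A \subset Sv] &
      [exists f : {ffun 'I_k -> V},
         [&& injectiveb f, f @: setT == Sv &
             [forall i, forall j, eH i j == ([set f i; f j] \in F)]]]].

Definition numcopies (k : nat) (eH : rel 'I_k) (V : finType) (e : rel V) : nat :=
  #|[set p | is_copy eH e p]|.

Definition Hfree (k : nat) (eH : rel 'I_k) (V : finType) (e : rel V) : Prop :=
  numcopies eH e = 0.

(* ex(n, H, F) = m : m is the maximum of N(H,G) over F-free simple graphs G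
   on n vertices (vertex set 'I_n). *)
Definition ex_eq (n : nat) (kH : nat) (eH : rel 'I_kH) (kF : nat) (eF : rel 'I_kF)
    (m : nat) : Prop :=
  (exists e : rel 'I_n, [/\ simple_graph e, Hfree eF e & numcopies eH e = m]) /\
  (forall e : rel 'I_n, simple_graph e -> Hfree eF e -> numcopies eH e <= m).

Definition M2 : rel 'I_4 := fun i j =>
  [|| (val i == 0) && (val j == 1), (val i == 1) && (val j == 0),
      (val i == 2) && (val j == 3) | (val i == 3) && (val j == 2)].

Definition S4 : rel 'I_4 := fun i j =>
  ((val i == 0) && (val j != 0)) || ((val j == 0) && (val i != 0)).

(* Main.v *)
Require Import Defs.
From mathcomp Require Import all_boot.
From mathcomp Require Import zify.
Set Implicit Arguments. Unset Strict Implicit. Unset Printing Implicit Defensive.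

Lemma set2_eq (V : finType) (a b x y : V) :
  [set a; b] = [set x; y] -> (a = x /\ b = y) \/ (a = y /\ b = x).
Proof.
move=> H.
have ha : a \in [set x; y] by rewrite -H !inE eqxx.
have hb : b \in [set x; y] by rewrite -H !inE eqxx orbT.
have hx : x \in [set a; b] by rewrite H !inE eqxx.
have hy : y \in [set a; b] by rewrite H !inE eqxx orbT.
move: ha hb hx hy; rewrite !inE.
by do 4 (case/orP => /eqP ?); subst; auto.
Qed.

Lemma set2_eqE (V : finType) (a b x y : V) :
  ([set a; b] == [set x; y]) = ((a == x) && (b == y)) || ((a == y) && (b == x)).
Proof.
apply/eqP/idP.
  by case/set2_eq => [[-> ->]|[-> ->]]; rewrite !eqxx ?orbT.
case/orP => /andP [/eqP -> /eqP ->] //; exact: setUC.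
Qed.

Lemma edgeE (V : finType) (e : rel V) a b : e a b -> [set a; b] \in edgeset e.
Proof. by move=> h; rewrite inE; apply/existsP; exists a; apply/existsP; exists b; rewrite h eqxx. Qed.

Lemma edge_neq (V : finType) (e : rel V) a b : simple_graph e -> e a b -> a != b.
Proof. by move=> [_ irr] h; apply/eqP => E; subst; rewrite irr in h. Qed.

Lemma edgesetP (V : finType) (e : rel V) A : A \in edgeset e ->
  exists x y, [/\ e x y & A = [set x; y]].
Proof.
by rewrite inE => /existsP [x /existsP [y /andP [h /eqP ->]]]; exists x, y.
Qed.

Lemma edge_of (V : finType) (e : rel V) a b : simple_graph e ->
  [set a; b] \in edgeset e -> e a b.
Proof.
move=> [sym _] /edgesetP [x [y [h E]]].
by case: (set2_eq E) => [[-> ->]|[-> ->]] //; rewrite sym.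
Qed.

Definition o0 : 'I_4 := @Ordinal 4 0 isT.
Definition o1 : 'I_4 := @Ordinal 4 1 isT.
Definition o2 : 'I_4 := @Ordinal 4 2 isT.
Definition o3 : 'I_4 := @Ordinal 4 3 isT.

Lemma ord4 (i : 'I_4) : [\/ i = o0, i = o1, i = o2 | i = o3].
Proof.
case: i => [[|[|[|[|m]]]] Hm].
- by constructor 1; apply: val_inj.
- by constructor 2; apply: val_inj.
- by constructor 3; apply: val_inj.
- by constructor 4; apply: val_inj.
- by [].
Qed.

Lemma uniq4 (V : eqType) (a b c d : V) : uniq [:: a; b; c; d] ->
  [/\ [/\ (a == b) = false, (a == c) = false & (a == d) = false],
      [/\ (b == a) = false, (b == c) = false & (b == d) = false],
      [/\ (c == a) = false, (c == b) = false & (c == d) = false] &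
      [/\ (d == a) = false, (d == b) = false & (d == c) = false]].
Proof.
move=> u.
have N i j : i < 4 -> j < 4 -> (nth a [:: a; b; c; d] i == nth a [:: a; b; c; d] j) = (i == j).
  by move=> hi hj; exact: nth_uniq.
split; split.
all: first [exact: (N 0 1 isT isT) | exact: (N 0 2 isT isT) | exact: (N 0 3 isT isT)
 | exact: (N 1 0 isT isT) | exact: (N 1 2 isT isT) | exact: (N 1 3 isT isT)
 | exact: (N 2 0 isT isT) | exact: (N 2 1 isT isT) | exact: (N 2 3 isT isT)
 | exact: (N 3 0 isT isT) | exact: (N 3 1 isT isT) | exact: (N 3 2 isT isT)].
Qed.

Definition f4 (V : finType) (a b c d : V) : {ffun 'I_4 -> V} :=
  [ffun i : 'I_4 => nth a [:: a; b; c; d] i].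

Lemma f4_inj (V : finType) (a b c d : V) : uniq [:: a; b; c; d] ->
  injectiveb (f4 a b c d).
Proof.
move=> u; apply/injectiveP => i j; rewrite !ffunE => /eqP.
by rewrite nth_uniq // => /eqP /val_inj.
Qed.

Lemma f4_img (V : finType) (a b c d : V) :
  f4 a b c d @: setT == [set a; b; c; d].
Proof.
apply/eqP/setP => x; rewrite !inE; apply/imsetP/idP.
  by case=> i _ ->; rewrite ffunE; case: (ord4 i) => ->; rewrite /= eqxx ?orbT.
by rewrite -!orbA => /or4P [] /eqP ->; [exists o0|exists o1|exists o2|exists o3]; rewrite ?ffunE.
Qed.

Lemma M2_copy_of (V : finType) (e : rel V) a b c d : simple_graph e ->
  uniq [:: a; b; c; d] -> e a b -> e c d ->
  is_copy M2 e ([set a; b; c; d], [set [set a; b]; [set c; d]]).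
Proof.
move=> sg u hab hcd; rewrite /is_copy; apply/and3P; split.
- by apply/subsetP => A /set2P [] ->; exact: edgeE.
- apply/forall_inP => A; rewrite !inE => /orP [] /eqP ->; apply/subsetP => x;
  by rewrite !inE => /orP [] /eqP ->; rewrite !eqxx ?orbT.
- apply/existsP; exists (f4 a b c d); rewrite f4_inj // f4_img /=.
  apply/forallP => i; apply/forallP => j; rewrite !ffunE !inE !set2_eqE.
  case: (uniq4 u) => [[ab ac ad] [ba bc bd] [ca cb cd] [da db dc]].
  by case: (ord4 i) => ->; case: (ord4 j) => ->;
    rewrite /M2 /= ?eqxx ?ab ?ac ?ad ?ba ?bc ?bd ?ca ?cb ?cd ?da ?db ?dc.
Qed.

Lemma M2_copy_shape (V : finType) (e : rel V) p : simple_graph e ->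
  is_copy M2 e p -> exists a b c d, [/\ uniq [:: a; b; c; d], e a b, e c d &
     p = ([set a; b; c; d], [set [set a; b]; [set c; d]])].
Proof.
case: p => S F sg.
rewrite /is_copy => /and3P [FE /forall_inP FS /existsP [f /and3P [finj /eqP fS /forallP fM]]].
have fM' i j : M2 i j = ([set f i; f j] \in F) by apply/eqP; exact: (forallP (fM i) j).
exists (f o0), (f o1), (f o2), (f o3).
have u : uniq [:: f o0; f o1; f o2; f o3].
  have -> : [:: f o0; f o1; f o2; f o3] = map f [:: o0; o1; o2; o3] by [].
  by rewrite (map_inj_uniq (injectiveP _ finj)).
have E01 : [set f o0; f o1] \in F by rewrite -fM'.
have E23 : [set f o2; f o3] \in F by rewrite -fM'.
split => //; [exact: edge_of sg (subsetP FE _ E01) | exact: edge_of sg (subsetP FE _ E23) |].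
congr (_, _).
- rewrite -fS; apply/setP => x; apply/imsetP/idP.
    by case=> i _ ->; rewrite !inE; case: (ord4 i) => ->; rewrite !eqxx ?orbT.
  by rewrite !inE -!orbA => /or4P [] /eqP ->; [exists o0|exists o1|exists o2|exists o3].
- apply/setP => A; rewrite !inE; apply/idP/idP.
  + move=> AF; have [x [y [hxy EA]]] := edgesetP (subsetP FE _ AF).
    have xS : x \in S by apply: (subsetP (FS _ AF)); rewrite EA !inE eqxx.
    have yS : y \in S by apply: (subsetP (FS _ AF)); rewrite EA !inE eqxx orbT.
    rewrite -fS in xS yS; case/imsetP: xS => i _ Ex; case/imsetP: yS => j _ Ey.
    have : M2 i j by rewrite fM' -Ex -Ey -EA.
    rewrite EA Ex Ey !set2_eqE.
    by case: (ord4 i) => ->; case: (ord4 j) => ->; rewrite /M2 /= ?eqxx ?orbT.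
  + by case/orP => /eqP ->.
Qed.

Definition Nd (V : finType) (e : rel V) (v : V) := [set A in edgeset e | v \in A].

Lemma S4_copy_deg (V : finType) (e : rel V) p : simple_graph e ->
  is_copy S4 e p -> exists v, 3 <= #|Nd e v|.
Proof.
case: p => S F sg.
rewrite /is_copy => /and3P [FE _ /existsP [f /and3P [finj _ /forallP fM]]].
have fM' i j : S4 i j = ([set f i; f j] \in F) by apply/eqP; exact: (forallP (fM i) j).
exists (f o0).
have u : uniq [:: f o0; f o1; f o2; f o3].
  have -> : [:: f o0; f o1; f o2; f o3] = map f [:: o0; o1; o2; o3] by [].
  by rewrite (map_inj_uniq (injectiveP _ finj)).
case: (uniq4 u) => [[ab ac ad] [ba bc bd] [ca cb cd] [da db dc]].
set s := [:: [set f o0; f o1]; [set f o0; f o2]; [set f o0; f o3]].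
have us : uniq s by rewrite /s /= !inE !set2_eqE !eqxx ?ab ?ac ?ad ?ba ?bc ?bd ?ca ?cb ?cd ?da ?db ?dc.
have sub : {subset s <= Nd e (f o0)}.
  move=> A; rewrite /s !in_cons in_nil orbF => /or3P [] /eqP ->;
  by rewrite /Nd; apply/setIdP; split; [apply: (subsetP FE); rewrite -fM' | rewrite !inE eqxx].
have : {subset s <= Nd e (f o0)} by [].
move/subsetP/subset_leq_card.
by rewrite (card_uniqP us).
Qed.

Lemma set3P' (T : finType) (x a b c : T) :
  x \in [set a; b; c] -> [\/ x = a, x = b | x = c].
Proof. by rewrite !inE -orbA => /or3P [] /eqP ->; [constructor 1|constructor 2|constructor 3]. Qed.

Lemma S4_copy_of (V : finType) (e : rel V) a b c d : simple_graph e ->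
  uniq [:: a; b; c; d] -> e a b -> e a c -> e a d ->
  is_copy S4 e ([set a; b; c; d], [set [set a; b]; [set a; c]; [set a; d]]).
Proof.
move=> sg u hab hac had; rewrite /is_copy; apply/and3P; split.
- by apply/subsetP => A /set3P' [] ->; exact: edgeE.
- apply/forall_inP => A /set3P' [] -> ; apply/subsetP => x;
  by rewrite !inE => /orP [] /eqP ->; rewrite !eqxx ?orbT.
- apply/existsP; exists (f4 a b c d); rewrite f4_inj // f4_img /=.
  apply/forallP => i; apply/forallP => j; rewrite !ffunE !inE !set2_eqE.
  case: (uniq4 u) => [[ab ac ad] [ba bc bd] [ca cb cd] [da db dc]].
  by case: (ord4 i) => ->; case: (ord4 j) => ->;
    rewrite /S4 /= ?eqxx ?ab ?ac ?ad ?ba ?bc ?bd ?ca ?cb ?cd ?da ?db ?dc.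
Qed.

Lemma Nd_nbr (V : finType) (e : rel V) v A : simple_graph e ->
  A \in Nd e v -> exists u, e v u /\ A = [set v; u].
Proof.
move=> [sym irr]; rewrite inE => /andP [/edgesetP [x [y [hxy ->]]]].
rewrite !inE => /orP [] /eqP ->; first by exists y.
by exists x; rewrite sym setUC.
Qed.

Lemma deg_S4_copy (V : finType) (e : rel V) v : simple_graph e ->
  3 <= #|Nd e v| -> exists p, is_copy S4 e p.
Proof.
move=> sg H.
have [A1 h1] : exists A1, A1 \in Nd e v by apply/set0Pn; rewrite -card_gt0; lia.
have [A2 h2] : exists A2, A2 \in Nd e v :\ A1.
  by apply/set0Pn; rewrite -card_gt0; move: H; rewrite (cardsD1 A1) h1; lia.
have [A3 h3] : exists A3, A3 \in Nd e v :\ A1 :\ A2.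
  apply/set0Pn; rewrite -card_gt0; move: H; rewrite (cardsD1 A1) h1.
  by rewrite (cardsD1 A2 (Nd e v :\ A1)) h2; lia.
move: h2 h3; rewrite !in_setD1 => /andP [n21 h2] /andP [n32 /andP [n31 h3]].
case: (Nd_nbr sg h1) => u1 [e1 E1]; case: (Nd_nbr sg h2) => u2 [e2 E2];
case: (Nd_nbr sg h3) => u3 [e3 E3]; subst A1 A2 A3.
have m21 : u2 != u1 by apply: contra n21 => /eqP ->.
have m32 : u3 != u2 by apply: contra n32 => /eqP ->.
have m31 : u3 != u1 by apply: contra n31 => /eqP ->.
have u : uniq [:: v; u1; u2; u3].
  rewrite /= !inE !negb_or (edge_neq sg e1) (edge_neq sg e2) (edge_neq sg e3).
  by rewrite !(eq_sym u1) m21 m31 (eq_sym u2) m32.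
by eexists; exact: S4_copy_of sg u e1 e2 e3.
Qed.

Lemma disj2 (T : finType) (x y : T) (B : {set T}) :
  [disjoint [set x; y] & B] = (x \notin B) && (y \notin B).
Proof.
rewrite -setI_eq0; apply/eqP/andP.
  move=> H; split; apply/negP => h.
    have : x \in [set x; y] :&: B by rewrite in_setI !inE eqxx h.
    by rewrite H inE.
  have : y \in [set x; y] :&: B by rewrite in_setI !inE eqxx orbT h.
  by rewrite H inE.
case=> hx hy; apply/setP => z; rewrite in_setI in_set0 !inE.
apply/negbTE/andP => [[/orP [] /eqP -> h]]; [by move: hx; rewrite h | by move: hy; rewrite h].
Qed.

Lemma edge_card (V : finType) (e : rel V) A : simple_graph e ->
  A \in edgeset e -> #|A| = 2.
Proof.
move=> sg /edgesetP [x [y [h ->]]]; by rewrite cards2 (edge_neq sg h).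
Qed.

Lemma sum_deg (V : finType) (e : rel V) : simple_graph e ->
  \sum_v #|Nd e v| = 2 * #|edgeset e|.
Proof.
move=> sg.
have -> : \sum_v #|Nd e v| = \sum_v \sum_(A | (A \in edgeset e) && (v \in A)) 1.
  apply: eq_bigr => v _; rewrite -sum1_card; apply: eq_bigl => A; by rewrite /Nd in_set.
rewrite (exchange_big_dep (fun A => A \in edgeset e)) /=; last by move=> v A _ /andP [].
transitivity (\sum_(A in edgeset e) 2).
  apply: eq_bigr => A hA; rewrite -(edge_card sg hA) -sum1_card; apply: eq_bigl => v.
  by rewrite hA.
by rewrite sum_nat_const mulnC.
Qed.

Lemma sum_deg_sq (V : finType) (e : rel V) :
  \sum_(A in edgeset e) \sum_(v in A) #|Nd e v| = \sum_v #|Nd e v| * #|Nd e v|.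
Proof.
rewrite (exchange_big_dep predT) //=.
apply: eq_bigr => v _.
rewrite (eq_bigl (fun A => A \in Nd e v)) ?sum_nat_const // => A.
by rewrite /Nd in_set.
Qed.

Definition Dj (V : finType) (e : rel V) (A : {set V}) :=
  [set B in edgeset e | [disjoint A & B]].

Lemma D_deg (V : finType) (e : rel V) A : simple_graph e -> A \in edgeset e ->
  #|Dj e A| + \sum_(v in A) #|Nd e v| = #|edgeset e| + 1.
Proof.
move=> sg hA; have [x [y [hxy EA]]] := edgesetP hA; have nxy := edge_neq sg hxy.
subst A.
rewrite big_setU1 ?big_set1 /=; last by rewrite inE.
have I : Nd e x :&: Nd e y = [set [set x; y]].
  apply/setP => B; rewrite in_setI in_set1; apply/idP/idP.
    case/andP => /setIdP [BE xB] /setIdP [_ yB].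
    have [x' [y' [h' EB]]] := edgesetP BE; subst B.
    move: xB yB nxy; rewrite !inE.
    by case/orP => /eqP ->; case/orP => /eqP ->; rewrite set2_eqE !eqxx ?orbT.
  move/eqP ->; apply/andP; split; apply/setIdP; split; try exact: edgeE.
    by rewrite !inE eqxx.
  by rewrite !inE eqxx orbT.
have U1 : edgeset e :&: (Nd e x :|: Nd e y) = Nd e x :|: Nd e y.
  apply/setIidPr; apply/subsetP => B; rewrite in_setU => /orP [] /setIdP [] //.
have U2 : edgeset e :\: (Nd e x :|: Nd e y) = Dj e [set x; y].
  apply/setP => B; rewrite in_setD in_setU /Dj /Nd !in_set disj2.
  by case: (boolP [exists x0, exists y0, e x0 y0 && (B == [set x0; y0])]) => h; rewrite ?h /= ?andbF ?andbT // negb_or.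
have := cardsID (Nd e x :|: Nd e y) (edgeset e).
rewrite U1 U2.
have := cardsUI (Nd e x) (Nd e y).
rewrite I cards1.
by move=> h1 h2; rewrite -h1 -h2 addnA [#|Dj e _| + _]addnC.
Qed.

Definition Cs (V : finType) (e : rel V) := [set p | is_copy M2 e p].

Lemma copy_card2 (V : finType) (e : rel V) p : simple_graph e ->
  p \in Cs e -> #|p.2| = 2.
Proof.
move=> sg; rewrite inE => /(M2_copy_shape sg) [a [b [c [d [u _ _ ->]]]]] /=.
case: (uniq4 u) => [[ab ac ad] [ba bc bd] [ca cb cd] [da db dc]].
by rewrite cards2 set2_eqE ac ad.
Qed.

Lemma copy_sub (V : finType) (e : rel V) p :
  p \in Cs e -> p.2 \subset edgeset e.
Proof. by case: p => S F; rewrite inE => /and3P []. Qed.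

Lemma D_eq (V : finType) (e : rel V) A : simple_graph e -> A \in edgeset e ->
  #|Dj e A| = #|[set p in Cs e | A \in p.2]|.
Proof.
move=> sg hA; have [x [y [hxy EA]]] := edgesetP hA.
have inj : {in Dj e A &, injective (fun B => (A :|: B, [set A; B]))}.
  move=> B B' hB hB' [_ /set2_eq [[_ ->]|[EB' EB]]] //.
  exfalso; move: hB => /setIdP [_]; rewrite EB EA disj2 !inE eqxx; done.
rewrite -(card_in_imset inj); apply: eq_card => p; apply/imsetP/idP.
- case=> B hB ->; apply/setIdP; split; last by rewrite /= !inE eqxx.
  move: hB => /setIdP [BE dAB]; have [c [d [hcd EB]]] := edgesetP BE.
  subst A B; move: dAB; rewrite disj2 !inE !negb_or => /andP [/andP [xc xd] /andP [yc yd]].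
  have u : uniq [:: x; y; c; d].
    by rewrite /= !inE !negb_or xc xd yc yd (edge_neq sg hxy) (edge_neq sg hcd).
  by have := M2_copy_of sg u hxy hcd; rewrite setUA.
- move=> /setIdP [pC Ap]; have := pC; rewrite inE.
  move=> /(M2_copy_shape sg) [a [b [c [d [u hab hcd Ep]]]]].
  case: (uniq4 u) => [[ab ac ad] [ba bc bd] [ca cb cd] [da db dc]].
  rewrite Ep /= in Ap; case/set2P: Ap => EA'.
  + exists [set c; d]; last by rewrite Ep EA' setUA.
    apply/setIdP; split; first exact: edgeE.
    by rewrite EA' disj2 !inE ac ad bc bd.
  + have E2 : p = ([set c; d] :|: [set a; b], [set [set c; d]; [set a; b]]).
      rewrite Ep; congr (_, _); last exact: setUC.
      by apply/setP => z; rewrite !inE; case: (z == a); case: (z == b); case: (z == c); case: (z == d).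
    exists [set a; b]; last by rewrite E2 EA'.
    apply/setIdP; split; first exact: edgeE.
    by rewrite EA' disj2 !inE ca cb da db.
Qed.

Lemma count2 (V : finType) (e : rel V) : simple_graph e ->
  2 * #|Cs e| = \sum_(A in edgeset e) #|Dj e A|.
Proof.
move=> sg.
rewrite (eq_bigr _ (fun A hA => D_eq sg hA)).
transitivity (\sum_(A in edgeset e) \sum_(p | (p \in Cs e) && (A \in p.2)) 1); last first.
  apply: eq_bigr => A _; rewrite -sum1_card; apply: eq_bigl => p; by rewrite in_set.
rewrite (exchange_big_dep (fun p => p \in Cs e)) /=; last by move=> A p _ /andP [].
transitivity (\sum_(p in Cs e) 2); first by rewrite sum_nat_const mulnC.
apply: eq_bigr => p hp; rewrite -(copy_card2 sg hp) -sum1_card; apply: eq_bigl => A.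
rewrite hp /=; case h: (A \in p.2); rewrite ?andbF ?andbT //.
by rewrite (subsetP (copy_sub hp) _ h).
Qed.

Lemma key_id (V : finType) (e : rel V) : simple_graph e ->
  2 * #|Cs e| + \sum_v #|Nd e v| * #|Nd e v| = #|edgeset e| * (#|edgeset e| + 1).
Proof.
move=> sg; rewrite count2 // -sum_deg_sq -big_split /=.
rewrite (eq_bigr (fun _ => #|edgeset e| + 1)); last by move=> A hA; exact: D_deg.
by rewrite sum_nat_const.
Qed.

Lemma Hfree_deg (V : finType) (e : rel V) v : simple_graph e -> Hfree S4 e ->
  #|Nd e v| <= 2.
Proof.
move=> sg hF; rewrite leqNgt; apply/negP => h.
case: (deg_S4_copy sg h) => p hp.
move: hF; rewrite /Hfree /numcopies => /eqP; rewrite cards_eq0 => /eqP H.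
have : p \in [set p | is_copy S4 e p] by rewrite inE.
by rewrite H inE.
Qed.

Lemma upper (n : nat) (e : rel 'I_n) : 3 <= n -> simple_graph e -> Hfree S4 e ->
  numcopies M2 e <= n * (n - 3) %/ 2.
Proof.
move=> n3 sg hF.
have deg v : #|Nd e v| <= 2 by exact: Hfree_deg.
have K := key_id sg.
have SD := sum_deg sg.
have h1 : \sum_v (3 * #|Nd e v|) <= \sum_v (#|Nd e v| * #|Nd e v| + 2).
  apply: leq_sum => v _; have := deg v; case: #|Nd e v| => [|[|[|]]] //.
rewrite -big_distrr big_split sum_nat_const card_ord /= in h1.
have h2 : \sum_v #|Nd e v| <= \sum_v #|Nd e v| * #|Nd e v|.
  by apply: leq_sum => v _; case: #|Nd e v| => [|d] //; rewrite leq_pmulr.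
have h3 : \sum_v #|Nd e v| <= \sum_(v : 'I_n) 2 by apply: leq_sum => v _; exact: deg.
rewrite sum_nat_const card_ord in h3.
rewrite /numcopies leq_divRL //.
move: K SD h1 h2 h3.
rewrite /Cs.
move: (#|[set p | is_copy M2 e p]|) (#|edgeset e|) (\sum_v #|Nd e v| * #|Nd e v|) (\sum_v #|Nd e v|).
move=> C m s t K SD h1 h2 h3.
have hmn : m <= n by lia.
case: (leqP (2 * m) n) => hm.
  have : m * m + 3 * n <= n * n + m.
    case: (ltnP n 4) => hn.
      have -> : n = 3 by lia.
      have hm1 : m <= 1 by lia.
      have := leq_mul hm1 hm1; nia.
    have hm2 : m + 2 <= n by lia.
    have := leq_mul hm2 hm2; nia.
  nia.
have : m * m + 5 * n <= n * n + 5 * m.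
  have [d Ed] : exists d, n = m + d by exists (n - m); lia.
  have h5 : 5 <= 2 * m + d by lia.
  rewrite Ed; move: (leq_mul (leqnn d) h5); clear; nia.
nia.
Qed.

Lemma ordS_neq k (x : 'I_k.+3) : (x == ordS x) = false.
Proof.
apply/negbTE/eqP => /(congr1 val) /=; have := ltn_ord x => hx.
case: (ltnP x.+1 k.+3) => h.
  by rewrite modn_small //; lia.
have -> : x.+1 = k.+3 by lia.
by rewrite modnn; lia.
Qed.

Lemma ordSS_neq k (x : 'I_k.+3) : (ordS (ordS x) == x) = false.
Proof.
apply/negbTE/eqP => /(congr1 val) /=; have := ltn_ord x => hx.
case: (ltnP x.+2 k.+3) => h.
  by rewrite (@modn_small x.+1) ?(@modn_small x.+2) //; lia.
case: (ltnP x.+1 k.+3) => h'.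
  rewrite (@modn_small x.+1) //.
  have -> : x.+2 = k.+3 by lia.
  by rewrite modnn; lia.
have -> : x.+1 = k.+3 by lia.
by rewrite modnn modn_small //; lia.
Qed.

Definition cyc (k : nat) : rel 'I_k.+3 := fun x y => (y == ordS x) || (x == ordS y).
Arguments cyc k : clear implicits.

Lemma cyc_simple k : simple_graph (cyc k).
Proof.
split; first by move=> x y; rewrite /cyc orbC.
by move=> x; rewrite /cyc ordS_neq.
Qed.

Lemma cyc_deg k (v : 'I_k.+3) : #|Nd (cyc k) v| = 2.
Proof.
have sg := cyc_simple k.
have -> : Nd (cyc k) v = [set [set v; ordS v]; [set v; ord_pred v]].
  apply/setP => A; apply/idP/idP.
    move/(Nd_nbr sg) => [u [hu ->]]; apply/set2P.
    case/orP: hu => /eqP E; first by left; rewrite E.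
    by right; rewrite E ordSK.
  case/set2P => ->; apply/setIdP; split; try by rewrite !inE eqxx.
    by apply: edgeE; rewrite /cyc eqxx.
  by apply: edgeE; rewrite /cyc ord_predK eqxx orbT.
rewrite cards2 set2_eqE eqxx /=.
have SP : (ordS v == ord_pred v) = false.
  apply/negbTE/eqP => E; have := ordSS_neq v; by rewrite E ord_predK eqxx.
by rewrite SP (eq_sym (ordS v)) ordS_neq andbF.
Qed.

Lemma lower k : exists e : rel 'I_k.+3,
  [/\ simple_graph e, Hfree S4 e & numcopies M2 e = k.+3 * (k.+3 - 3) %/ 2].
Proof.
exists (cyc k); have sg := cyc_simple k; split => //.
  rewrite /Hfree /numcopies; apply/eqP; rewrite cards_eq0; apply/eqP/setP => p.
  rewrite inE in_set0; apply/negbTE/negP => hp.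
  by case: (S4_copy_deg sg hp) => v; rewrite cyc_deg.
have K := key_id sg; have SD := sum_deg sg.
rewrite (eq_bigr (fun _ => 4)) ?sum_nat_const ?card_ord in K; last by move=> v _; rewrite cyc_deg.
rewrite (eq_bigr (fun _ => 2)) ?sum_nat_const ?card_ord in SD; last by move=> v _; rewrite cyc_deg.
rewrite /numcopies; move: K SD; rewrite /Cs.
move: (#|[set p | is_copy M2 (cyc k) p]|) (#|edgeset (cyc k)|) => C m K SD.
have -> : k.+3 * (k.+3 - 3) = C * 2 by nia.
by rewrite mulnK.
Qed.

Theorem mainTheorem19 (n : nat) : 3 <= n ->
  ex_eq n M2 S4 (n * (n - 3) %/ 2).
Proof.
case: n => [|[|[|k]]] // _; split; first exact: lower.
by move=> e sg hF; apply: upper.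
Qed.
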